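(* Let $X$ be a Banach space, $\varphi:X\to\,]-\infty,+\infty]$ be quasiconvex, proper and lower semicontinuous, and $v^*\in X^*$. If $\varphi_{v^*}$ is not quasiconvex, then there exist $u,v,w\in X$ with $v\in\,]u,w[$ such that (i) $\varphi(w)\ge\varphi(v)>\varphi(u)$; (ii) $\varphi_{v^*}(v)>\max\{\varphi_{v^*}(u),\varphi_{v^*}(w)\}$; (iii) for every $\gamma>0$ there exists $v_\gamma\in\mathbb{B}_\gamma(v)\cap\,]v,w[$ with $\varphi_{v^*}(v)>\varphi_{v^*}(v_\gamma)$.
   Context: $]a,b[$ denotes the open segment $\{a+t(b-a):t\in\,]0,1[\}$; $\mathbb{B}_\gamma(v)$ is the open ball of radius $\gamma$ centered at $v$. For $v^*\in X^*$, $\varphi_{v^*}(x):=\varphi(x)+\langle v^*,x\rangle$. A function $f$ is quasiconvex if $f(\lambda x+(1-\lambda)y)\le\max\{f(x),f(y)\}$ for all $x,y\in X$, $\lambda\in\,]0,1[$. *)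

(* Defs.v *)
From Stdlib Require Import Reals Lra.
Open Scope R_scope.

Record Banach := {
  car :> Type;
  vzero : car;
  vadd : car -> car -> car;
  vopp : car -> car;
  vscal : R -> car -> car;
  vnorm : car -> R;
  vadd_assoc : forall x y z, vadd x (vadd y z) = vadd (vadd x y) z;
  vadd_comm : forall x y, vadd x y = vadd y x;
  vadd_zero : forall x, vadd x vzero = x;
  vadd_opp : forall x, vadd x (vopp x) = vzero;
  vscal_one : forall x, vscal 1 x = x;
  vscal_assoc : forall a b x, vscal a (vscal b x) = vscal (a * b) x;
  vscal_distr_r : forall a x y, vscal a (vadd x y) = vadd (vscal a x) (vscal a y);
  vscal_distr_l : forall a b x, vscal (a + b) x = vadd (vscal a x) (vscal b x);
  vnorm_nonneg : forall x, 0 <= vnorm x;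
  vnorm_zero : forall x, vnorm x = 0 -> x = vzero;
  vnorm_scal : forall a x, vnorm (vscal a x) = Rabs a * vnorm x;
  vnorm_triangle : forall x y, vnorm (vadd x y) <= vnorm x + vnorm y;
  complete : forall u : nat -> car,
    (forall eps, eps > 0 -> exists N, forall n m, (n >= N)%nat -> (m >= N)%nat ->
        vnorm (vadd (u n) (vopp (u m))) < eps) ->
    exists l, forall eps, eps > 0 -> exists N, forall n, (n >= N)%nat ->
        vnorm (vadd (u n) (vopp l)) < eps
}.

Arguments vzero {_}. Arguments vadd {_}. Arguments vopp {_}.
Arguments vscal {_}. Arguments vnorm {_}.

Definition vsub {X : Banach} (x y : X) : X := vadd x (vopp y).

Definition in_open_seg {X : Banach} (a b x : X) : Prop :=
  exists t, 0 < t < 1 /\ x = vadd a (vscal t (vsub b a)).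

Definition in_ball {X : Banach} (v : X) (g : R) (x : X) : Prop :=
  vnorm (vsub x v) < g.

Definition is_cont_linear {X : Banach} (f : X -> R) : Prop :=
  (forall x y, f (vadd x y) = f x + f y) /\
  (forall a x, f (vscal a x) = a * f x) /\
  (exists C, forall x, Rabs (f x) <= C * vnorm x).

Inductive ereal := Fin (r : R) | PInf.

Definition ele (a b : ereal) : Prop :=
  match a, b with
  | _, PInf => True
  | PInf, Fin _ => False
  | Fin x, Fin y => x <= y
  end.
Definition elt (a b : ereal) : Prop :=
  match a, b with
  | Fin _, PInf => True
  | PInf, _ => False
  | Fin x, Fin y => x < y
  end.
Definition emax (a b : ereal) : ereal :=
  match a, b with
  | PInf, _ | _, PInf => PInf
  | Fin x, Fin y => Fin (Rmax x y)
  end.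
Definition eaddr (a : ereal) (r : R) : ereal :=
  match a with PInf => PInf | Fin x => Fin (x + r) end.

Definition quasiconvex {X : Banach} (f : X -> ereal) : Prop :=
  forall x y (l : R), 0 < l < 1 ->
    ele (f (vadd (vscal l x) (vscal (1 - l) y))) (emax (f x) (f y)).

Definition proper {X : Banach} (f : X -> ereal) : Prop :=
  exists x, f x <> PInf.

Definition lsc {X : Banach} (f : X -> ereal) : Prop :=
  forall x (r : R), elt (Fin r) (f x) ->
    exists d, d > 0 /\ forall y, vnorm (vsub y x) < d -> elt (Fin r) (f y).

Definition tilt {X : Banach} (phi : X -> ereal) (vs : X -> R) : X -> ereal :=
  fun x => eaddr (phi x) (vs x).

(* Main.v *)
Require Import Defs.
From Stdlib Require Import Reals Lra Classical.
Open Scope R_scope.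

Lemma frac01 a m b : a < m < b -> 0 < (m-a)/(b-a) < 1 /\ 0 < (b-m)/(b-a) < 1.
Proof.
  intros H.
  assert (h1 : 0 < (m-a)/(b-a)) by (apply Rdiv_lt_0_compat; lra).
  assert (h2 : 0 < (b-m)/(b-a)) by (apply Rdiv_lt_0_compat; lra).
  assert (h3 : (m-a)/(b-a) + (b-m)/(b-a) = 1) by (field; lra).
  lra.
Qed.

Lemma vadd0l (X : Banach) (x : X) : vadd vzero x = x.
Proof. rewrite vadd_comm, vadd_zero. reflexivity. Qed.

Lemma opp_unique (X : Banach) (p q : X) : vadd p q = vzero -> q = vopp p.
Proof.
  intros H.
  rewrite <- (vadd_zero X q), <- (vadd_opp X p), vadd_assoc, (vadd_comm X q p), H, vadd0l.
  reflexivity.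
Qed.

Lemma vscal0 (X : Banach) (x : X) : vscal 0 x = vzero.
Proof.
  assert (h : vscal 0 x = vadd (vscal 0 x) (vscal 0 x)).
  { rewrite <- vscal_distr_l. f_equal. ring. }
  set (z := vscal 0 x) in *.
  transitivity (vadd z (vadd z (vopp z))).
  - rewrite vadd_opp, vadd_zero. reflexivity.
  - rewrite vadd_assoc, <- h, vadd_opp. reflexivity.
Qed.

Lemma vadd_swap4 (X : Banach) (a b c d : X) :
  vadd (vadd a b) (vadd c d) = vadd (vadd a c) (vadd b d).
Proof.
  rewrite <- !vadd_assoc. f_equal.
  rewrite !vadd_assoc. f_equal. apply vadd_comm.
Qed.

Definition L (X : Banach) (x y : X) (a b : R) : X := vadd (vscal a x) (vscal b y).

Lemma L_add (X : Banach) (x y : X) a b a' b' :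
  vadd (L X x y a b) (L X x y a' b') = L X x y (a+a') (b+b').
Proof. unfold L. rewrite vadd_swap4, !vscal_distr_l. reflexivity. Qed.

Lemma L_scal (X : Banach) (x y : X) k a b :
  vscal k (L X x y a b) = L X x y (k*a) (k*b).
Proof. unfold L. rewrite vscal_distr_r, !vscal_assoc. reflexivity. Qed.

Lemma L_ext (X : Banach) (x y : X) a b a' b' : a = a' -> b = b' -> L X x y a b = L X x y a' b'.
Proof. intros; subst; reflexivity. Qed.

Lemma L_opp (X : Banach) (x y : X) a b : vopp (L X x y a b) = L X x y (-a) (-b).
Proof.
  symmetry. apply opp_unique. rewrite L_add.
  replace (a + - a) with 0 by ring. replace (b + - b) with 0 by ring.
  unfold L. rewrite !vscal0, vadd_zero. reflexivity.
Qed.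

Lemma L_sub (X : Banach) (x y : X) a b c d :
  vsub (L X x y a b) (L X x y c d) = L X x y (a-c) (b-d).
Proof. unfold vsub. rewrite L_opp, L_add. apply L_ext; ring. Qed.

Lemma L10 (X : Banach) (x y : X) : L X x y 1 0 = x.
Proof. unfold L. rewrite vscal_one, vscal0, vadd_zero. reflexivity. Qed.

Lemma L01 (X : Banach) (x y : X) : L X x y 0 1 = y.
Proof. unfold L. rewrite vscal_one, vscal0, vadd0l. reflexivity. Qed.

Definition AP (X : Banach) (x y : X) p q p' q' (s : R) : X := L X x y (p + q*s) (p' + q'*s).

Lemma qc_AP (X : Banach) (phi : X -> ereal) x y p q p' q' :
  quasiconvex phi ->
  forall s1 s2 l, 0<l<1 -> ele (phi (AP X x y p q p' q' (l*s1 + (1-l)*s2)))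
     (emax (phi (AP X x y p q p' q' s1)) (phi (AP X x y p q p' q' s2))).
Proof.
  intros H s1 s2 l hl.
  replace (AP X x y p q p' q' (l*s1 + (1-l)*s2)) with
    (vadd (vscal l (AP X x y p q p' q' s1)) (vscal (1-l) (AP X x y p q p' q' s2))).
  - apply H; exact hl.
  - unfold AP. rewrite !L_scal, L_add. apply L_ext; ring.
Qed.

Lemma seg_AP (X : Banach) x y p q p' q' :
  forall tu tw tv tau, 0<tau<1 -> tv = tu + tau*(tw-tu) ->
    in_open_seg (AP X x y p q p' q' tu) (AP X x y p q p' q' tw) (AP X x y p q p' q' tv).
Proof.
  intros tu tw tv tau ht e. exists tau. split; [exact ht|].
  unfold AP. rewrite L_sub, L_scal, L_add. subst tv. apply L_ext; ring.
Qed.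

Lemma ball_AP (X : Banach) x y p q p' q' :
  forall s t, vnorm (vsub (AP X x y p q p' q' s) (AP X x y p q p' q' t))
     <= vnorm (L X x y q q') * Rabs (s - t).
Proof.
  intros s t. unfold AP. rewrite L_sub.
  replace (L X x y (p + q * s - (p + q * t)) (p' + q' * s - (p' + q' * t)))
    with (vscal (s - t) (L X x y q q')).
  - rewrite vnorm_scal. lra.
  - rewrite L_scal. apply L_ext; ring.
Qed.

Lemma vs_L (X : Banach) (vs : X -> R) x y a b : is_cont_linear vs ->
  vs (L X x y a b) = a * vs x + b * vs y.
Proof. intros [Ha [Hs _]]. unfold L. rewrite Ha, !Hs. reflexivity. Qed.

Definition fin_part (e : ereal) : R := match e with Fin r => r | PInf => 0 end.

Lemma not_ele a b : ~ ele a b -> elt b a.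
Proof. destruct a, b; simpl; intros; try tauto; lra. Qed.

Lemma emax_comm a b : emax a b = emax b a.
Proof. destruct a, b; simpl; try reflexivity. rewrite Rmax_comm; reflexivity. Qed.

Lemma core (X : Banach) (phi : X -> ereal) (vs : X -> R) (P : R -> X) (A c s0 K : R) :
  0 <= c -> 0 < s0 < 1 -> 0 <= K ->
  (forall t, vs (P t) = A - c*t) ->
  (forall s1 s2 l, 0<l<1 -> ele (phi (P (l*s1 + (1-l)*s2))) (emax (phi (P s1)) (phi (P s2)))) ->
  (forall tu tw tv tau, 0<tau<1 -> tv = tu + tau*(tw-tu) -> in_open_seg (P tu) (P tw) (P tv)) ->
  (forall s t, vnorm (vsub (P s) (P t)) <= K * Rabs (s - t)) ->
  elt (emax (tilt phi vs (P 0)) (tilt phi vs (P 1))) (tilt phi vs (P s0)) ->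
  exists u v w : X,
    in_open_seg u w v /\
    (ele (phi v) (phi w) /\ elt (phi u) (phi v)) /\
    elt (emax (tilt phi vs u) (tilt phi vs w)) (tilt phi vs v) /\
    (forall g, g > 0 -> exists vg, in_ball v g vg /\ in_open_seg v w vg /\
        elt (tilt phi vs vg) (tilt phi vs v)).
Proof.
  intros Hc Hs0 HK Hvs Hqc Hseg Hball Hel.
  set (gr := fun s => fin_part (phi (P s))).
  assert (F0 : phi (P 0) = Fin (gr 0)).
  { unfold gr; destruct (phi (P 0)) eqn:E; [reflexivity|]. exfalso.
    unfold tilt, eaddr in Hel; rewrite E in Hel; simpl in Hel. exact Hel. }
  assert (F1 : phi (P 1) = Fin (gr 1)).
  { unfold gr; destruct (phi (P 1)) eqn:E; [reflexivity|]. exfalso.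
    unfold tilt, eaddr in Hel; rewrite E, F0 in Hel; simpl in Hel. exact Hel. }
  assert (Fs : forall s, 0 <= s <= 1 -> phi (P s) = Fin (gr s)).
  { intros s hs. destruct (Req_dec s 0) as [e|n0]; [rewrite e; exact F0|].
    destruct (Req_dec s 1) as [e|n1]; [rewrite e; exact F1|].
    pose proof (Hqc 1 0 s ltac:(lra)) as H.
    replace (s*1 + (1-s)*0) with s in H by ring.
    rewrite F0, F1 in H; simpl in H.
    unfold gr; destruct (phi (P s)); [reflexivity| contradiction]. }
  set (th := fun s => gr s + (A - c*s)).
  assert (Ft : forall s, 0 <= s <= 1 -> tilt phi vs (P s) = Fin (th s)).
  { intros s hs. unfold tilt. rewrite Fs by exact hs. rewrite Hvs. reflexivity. }
  rewrite !Ft in Hel by lra. simpl in Hel.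
  assert (Th0 : th 0 < th s0) by (pose proof (Rmax_l (th 0) (th 1)); lra).
  assert (Th1 : th 1 < th s0) by (pose proof (Rmax_r (th 0) (th 1)); lra).
  assert (qcb : forall a m b, 0<=a -> a<m -> m<b -> b<=1 -> gr m <= Rmax (gr a) (gr b)).
  { intros a m b h1 h2 h3 h4.
    destruct (frac01 a m b ltac:(lra)) as [_ hf].
    pose proof (Hqc a b ((b-m)/(b-a)) hf) as H.
    replace ((b-m)/(b-a)*a + (1-(b-m)/(b-a))*b) with m in H by (field; lra).
    rewrite !Fs in H by lra. simpl in H. exact H. }
  assert (G0 : gr 0 < gr s0).
  { unfold th in Th0. assert (0 <= c*s0) by (apply Rmult_le_pos; lra). lra. }
  assert (Mono : forall s s', s0 <= s -> s <= s' -> s' <= 1 -> gr s <= gr s').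
  { intros s s' h1 h2 h3. destruct (Rle_or_lt (gr s) (gr s')) as [h|h]; [exact h|].
    exfalso. destruct (Req_dec s s') as [e|ne]; [subst; lra|].
    pose proof (qcb 0 s s' ltac:(lra) ltac:(lra) ltac:(lra) h3) as q1.
    assert (gs : gr s <= gr 0).
    { unfold Rmax in q1; destruct (Rle_dec (gr 0) (gr s')); lra. }
    destruct (Req_dec s s0) as [e|ne2]; [subst; lra|].
    pose proof (qcb 0 s0 s ltac:(lra) ltac:(lra) ltac:(lra) ltac:(lra)) as q2.
    unfold Rmax in q2; destruct (Rle_dec (gr 0) (gr s)); lra. }
  set (M := th s0).
  set (E := fun s => s0 <= s <= 1 /\ forall r, s0 <= r <= s -> M <= th r).
  destruct (completeness E) as [T [HTub HTlub]].
  { exists 1. intros s [hs _]. lra. }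
  { exists s0. split; [lra|]. intros r hr. replace r with s0 by lra. unfold M; lra. }
  assert (HTs0 : s0 <= T).
  { apply HTub. split; [lra|]. intros r hr. replace r with s0 by lra. unfold M; lra. }
  assert (HT1 : T <= 1) by (apply HTlub; intros s [hs _]; lra).
  assert (Ha : forall r, s0 <= r < T -> M <= th r).
  { intros r hr. destruct (Rle_lt_dec M (th r)) as [h|h]; [exact h|]. exfalso.
    assert (T <= r); [|lra].
    apply HTlub. intros s [hs Hr]. destruct (Rle_lt_dec s r) as [h'|h']; [exact h'|].
    exfalso. pose proof (Hr r ltac:(lra)). lra. }
  assert (Hb : M <= th T).
  { destruct (Req_dec T s0) as [e|ne]; [rewrite e; unfold M; lra|].
    destruct (Rle_lt_dec M (th T)) as [h|h]; [exact h|]. exfalso.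
    set (eps := M - th T).
    set (d := eps/(2*c+2)).
    assert (hd : d*(2*c+2) = eps) by (unfold d; field; lra).
    assert (dpos : 0 < d) by (unfold d, eps; apply Rdiv_lt_0_compat; lra).
    set (r := Rmax s0 (T-d)).
    assert (r1 : s0 <= r) by apply Rmax_l.
    assert (r2 : r < T) by (apply Rmax_lub_lt; lra).
    assert (r3 : T - d <= r) by apply Rmax_r.
    pose proof (Ha r ltac:(lra)) as h1.
    pose proof (Mono r T r1 ltac:(lra) HT1) as h2.
    assert (h3 : c*(T-r) <= c*d) by (apply Rmult_le_compat_l; lra).
    unfold th in h1, eps. unfold eps in hd. unfold th in hd. nra. }
  assert (HT1' : T < 1).
  { destruct (Req_dec T 1) as [e|ne]; [|lra]. rewrite e in Hb. unfold M in Hb. lra. }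
  assert (Hd : forall g, g > 0 -> exists s, T < s < 1 /\ K*Rabs(s-T) < g /\ th s < th T).
  { intros g hg. apply NNPP; intro Hn.
    set (d := g/(2*(K+1))).
    assert (hd : d*(2*(K+1)) = g) by (unfold d; field; lra).
    assert (dpos : 0 < d) by (unfold d; apply Rdiv_lt_0_compat; lra).
    set (s' := Rmin (T+d) ((T+1)/2)).
    assert (q1 : s' <= T + d) by apply Rmin_l.
    assert (q2 : s' <= (T+1)/2) by apply Rmin_r.
    assert (q3 : T < s') by (apply Rmin_glb_lt; lra).
    assert (Es : E s').
    { split; [lra|]. intros r [hr1 hr2].
      destruct (Rlt_or_le r T) as [h|h]; [apply Ha; lra|].
      destruct (Req_dec r T) as [e|ne]; [rewrite e; exact Hb|].
      destruct (Rle_lt_dec (th T) (th r)) as [h'|h']; [lra|].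
      exfalso; apply Hn; exists r. split; [lra|split;[|exact h']].
      rewrite Rabs_right by lra.
      assert (K*(r-T) <= K*d) by (apply Rmult_le_compat_l; lra). nra. }
    pose proof (HTub s' Es). lra. }
  exists (P 0), (P T), (P 1).
  split; [apply Hseg with (tau := T); [lra|ring]|].
  split.
  { rewrite !Fs by lra. simpl. split; [apply Mono; lra|].
    pose proof (Mono s0 T ltac:(lra) HTs0 HT1). lra. }
  split.
  { rewrite !Ft by lra. simpl. apply Rmax_lub_lt; unfold M in Hb; lra. }
  intros g hg. destruct (Hd g hg) as [s [hs1 [hs2 hs3]]].
  exists (P s). split; [unfold in_ball; eapply Rle_lt_trans; [apply Hball|exact hs2]|].
  split.
  { destruct (frac01 T s 1 ltac:(lra)) as [hf _].
    apply Hseg with (tau := (s-T)/(1-T)); [exact hf| field; lra]. }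
  rewrite !Ft by lra. simpl. exact hs3.
Qed.

Theorem lemma3p3 (X : Banach) (phi : X -> ereal) (vs : X -> R) :
  quasiconvex phi -> proper phi -> lsc phi -> is_cont_linear vs ->
  ~ quasiconvex (tilt phi vs) ->
  exists u v w : X,
    in_open_seg u w v /\
    (ele (phi v) (phi w) /\ elt (phi u) (phi v)) /\
    elt (emax (tilt phi vs u) (tilt phi vs w)) (tilt phi vs v) /\
    (forall g, g > 0 -> exists vg, in_ball v g vg /\ in_open_seg v w vg /\
        elt (tilt phi vs vg) (tilt phi vs v)).
Proof.
  intros Hqc _ _ Hlin Hnq.
  unfold quasiconvex in Hnq.
  apply not_all_ex_not in Hnq as [x Hnq].
  apply not_all_ex_not in Hnq as [y Hnq].
  apply not_all_ex_not in Hnq as [l Hnq].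
  apply imply_to_and in Hnq as [hl Hnq].
  apply not_ele in Hnq.
  destruct (Rle_or_lt 0 (vs y - vs x)) as [hb|hb].
  - apply (core X phi vs (AP X x y 0 1 1 (-1)) (vs y) (vs y - vs x) l
             (vnorm (L X x y 1 (-1)))); try assumption.
    + apply vnorm_nonneg.
    + intros t. unfold AP. rewrite vs_L by exact Hlin. ring.
    + apply qc_AP; exact Hqc.
    + apply seg_AP.
    + apply ball_AP.
    + replace (AP X x y 0 1 1 (-1) 0) with y
        by (unfold AP; rewrite <- (L01 X x y) at 1; apply L_ext; ring).
      replace (AP X x y 0 1 1 (-1) 1) with x
        by (unfold AP; rewrite <- (L10 X x y) at 1; apply L_ext; ring).
      replace (AP X x y 0 1 1 (-1) l) with (vadd (vscal l x) (vscal (1 - l) y))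
        by (unfold AP; change (vadd (vscal l x) (vscal (1 - l) y)) with (L X x y l (1-l));
            apply L_ext; ring).
      rewrite emax_comm. exact Hnq.
  - apply (core X phi vs (AP X x y 1 (-1) 0 1) (vs x) (-(vs y - vs x)) (1-l)
             (vnorm (L X x y (-1) 1))); try lra.
    + apply vnorm_nonneg.
    + intros t. unfold AP. rewrite vs_L by exact Hlin. ring.
    + apply qc_AP; exact Hqc.
    + apply seg_AP.
    + apply ball_AP.
    + replace (AP X x y 1 (-1) 0 1 0) with x
        by (unfold AP; rewrite <- (L10 X x y) at 1; apply L_ext; ring).
      replace (AP X x y 1 (-1) 0 1 1) with y
        by (unfold AP; rewrite <- (L01 X x y) at 1; apply L_ext; ring).
      replace (AP X x y 1 (-1) 0 1 (1-l)) with (vadd (vscal l x) (vscal (1 - l) y))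
        by (unfold AP; change (vadd (vscal l x) (vscal (1 - l) y)) with (L X x y l (1-l));
            apply L_ext; ring).
      exact Hnq.
Qed.
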